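(* For any $F\subset\bigcup_kS_k$ there is $d\in\{1,\dots,N\}$ such that $S^{N-1}_{\mathbb R}\cap\bar S^{N-1}_{\mathbb R,F}=S^{N-1,d-1}_{\mathbb R}$. Moreover $d\in\{1,2,N\}$.
   Context: $C(S^{N-1}_{\mathbb R,+})$ denotes the universal $C^*$-algebra generated by self-adjoint $x_1,\dots,x_N$ with $\sum_ix_i^2=1$; subspaces are quotients by relations among the $x_i$, intersections impose both sets of relations. $S^{N-1}_{\mathbb R}$ is defined by $x_ix_j=x_jx_i$ for all $i,j$ (the usual real sphere), and for $d\in\{1,\dots,N\}$, $S^{N-1,d-1}_{\mathbb R}=\{x\in S^{N-1}_{\mathbb R}: x_{i_0}\cdots x_{i_d}=0$ for all pairwise distinct $i_0,\dots,i_d\}$ (so $S^{N-1,N-1}_{\mathbb R}=S^{N-1}_{\mathbb R}$). For $\sigma\in S_k$ and indices $i_1,\dots,i_k$ let $\varepsilon_\sigma(i)=(-1)^m$ with $m$ the number of pairs $r<s$ with $\sigma(r)>\sigma(s)$ and $i_{\sigma(r)}\ne i_{\sigma(s)}$. For $F\subset\bigcup_kS_k$, $\bar S^{N-1}_{\mathbb R,F}$ is the subsphere of $S^{N-1}_{\mathbb R,+}$ defined by the relations $x_{i_1}\cdots x_{i_k}=\varepsilon_\sigma(i)x_{i_{\sigma(1)}}\cdots x_{i_{\sigma(k)}}$ for all $\sigma\in F$ (with $\sigma\in S_k$) and all $i_1,\dots,i_k$. *)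

(* Defs.v *)
From mathcomp Require Import all_boot all_fingroup.
From Stdlib Require Import Reals.
Set Implicit Arguments. Unset Strict Implicit. Unset Printing Implicit Defensive.

Definition point (N : nat) := 'I_N -> R.

Definition on_sphere (N : nat) (x : point N) : Prop :=
  \big[Rplus/R0]_(i < N) Rmult (x i) (x i) = R1.

Definition mono (N k : nat) (x : point N) (i : 'I_k -> 'I_N) : R :=
  \big[Rmult/R1]_(r < k) x (i r).

Definition inv_count (N k : nat) (s : 'S_k) (i : 'I_k -> 'I_N) : nat :=
  #|[set p : 'I_k * 'I_k |
      [&& (p.1 < p.2)%N, (s p.2 < s p.1)%N & i (s p.1) != i (s p.2)]]|.

Definition eps (N k : nat) (s : 'S_k) (i : 'I_k -> 'I_N) : R :=
  pow (Ropp R1) (inv_count s i).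

Definition perm_family := forall k : nat, 'S_k -> Prop.

(* x satisfies the relations defining \bar S^{N-1}_{R,F} (evaluated at a
   point of the commutative sphere) *)
Definition sat_F (N : nat) (F : perm_family) (x : point N) : Prop :=
  forall (k : nat) (s : 'S_k), F k s ->
    forall i : 'I_k -> 'I_N,
      mono x i = Rmult (eps s i) (mono x (fun r => i (s r))).

Definition in_inter (N : nat) (F : perm_family) (x : point N) : Prop :=
  on_sphere x /\ sat_F F x.

Definition in_Sd (N d : nat) (x : point N) : Prop :=
  on_sphere x /\
  forall i : 'I_d.+1 -> 'I_N, injective i -> mono x i = R0.

(* Main.v *)
Require Import Defs.
From HB Require Import structures.
From mathcomp Require Import all_boot all_fingroup.
From Stdlib Require Import Reals Lra Classical.
Set Implicit Arguments. Unset Strict Implicit. Unset Printing Implicit Defensive.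

HB.instance Definition _ := Monoid.isComLaw.Build R R1 Rmult (fun a b c => esym (Rmult_assoc a b c)) Rmult_comm Rmult_1_l.

Lemma mono_perm N k (x : point N) (s : 'S_k) (i : 'I_k -> 'I_N) :
  mono x (fun r => i (s r)) = mono x i.
Proof. rewrite /mono. rewrite [RHS](reindex_inj (@perm_inj _ s)). by []. Qed.

Lemma mono0 N k (x : point N) (i : 'I_k -> 'I_N) :
  mono x i = R0 <-> exists r, x (i r) = R0.
Proof.
split.
- move=> H; apply: NNPP => Hn.
  have Hall : forall r, x (i r) <> R0 by move=> r Hr; apply: Hn; exists r.
  move: H; rewrite /mono; apply: (big_ind (fun v => v <> R0)).
  + exact: R1_neq_R0.
  + by move=> u v Hu Hv; apply: Rmult_integral_contrapositive_currified.
  + by move=> r _; apply: Hall.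
- case=> r Hr; rewrite /mono (bigD1 r) //= Hr; exact: Rmult_0_l.
Qed.

Lemma eps_val N k (s : 'S_k) (i : 'I_k -> 'I_N) :
  eps s i = if odd (inv_count s i) then Ropp R1 else R1.
Proof.
rewrite /eps; elim: (inv_count s i) => [|n IH] //=.
rewrite IH; case: (odd n) => /=; lra.
Qed.

Lemma sat_FE N (F : perm_family) (x : point N) :
  sat_F F x <-> forall k (s : 'S_k), F k s -> forall i : 'I_k -> 'I_N,
     odd (inv_count s i) -> mono x i = R0.
Proof.
split.
- move=> H k s Fs i Hodd; have := H k s Fs i.
  rewrite mono_perm eps_val Hodd; lra.
- move=> H k s Fs i; rewrite mono_perm eps_val.
  case Ho: (odd _); last lra.
  rewrite (H k s Fs i Ho); lra.
Qed.

Lemma inv_relabel N k (s : 'S_k) (i : 'I_k -> 'I_N) (g : 'I_N -> 'I_N) :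
  (forall r r', (g (i r) == g (i r')) = (i r == i r')) ->
  inv_count s (fun r => g (i r)) = inv_count s i.
Proof. by move=> H; rewrite /inv_count; apply: eq_card => p; rewrite !inE H. Qed.

Lemma inv_const N k (s : 'S_k) (i : 'I_k -> 'I_N) :
  (forall r r', i r = i r') -> inv_count s i = 0.
Proof.
move=> H; rewrite /inv_count; apply/eqP; rewrite cards_eq0; apply/eqP/setP => p.
by rewrite !inE (H (s p.1) (s p.2)) eqxx !andbF.
Qed.

Lemma inj_le m n (f : 'I_m -> 'I_n) : injective f -> (m <= n)%N.
Proof. by move=> Hf; have := leq_card f Hf; rewrite !card_ord. Qed.

Definition Invp k (s : 'S_k) (p : 'I_k * 'I_k) := ((p.1 < p.2)%N && (s p.2 < s p.1)%N).

Lemma inv_countE N k (s : 'S_k) (i : 'I_k -> 'I_N) :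
  inv_count s i = \sum_(p | Invp s p) (i (s p.1) != i (s p.2) : nat).
Proof.
rewrite /inv_count -sum1_card big_mkcond [RHS]big_mkcond /=.
apply: eq_bigr => p _; rewrite inE /Invp.
by case: (_ < _)%N; case: (_ < _)%N; case: (_ != _).
Qed.

Definition key N (x y : 'I_N) := if (x < y)%N then (x, y) else (y, x).

Definition hcol N (a b c t : 'I_N) := if t == a then a else if t == b then b else c.
Definition gcol N (a b t : 'I_N) := if t == a then a else b.

Lemma keyE N (a b x y : 'I_N) : (a < b)%N ->
  (key x y == (a, b)) = ((x == a) && (y == b)) || ((x == b) && (y == a)).
Proof.
move=> ab; rewrite /key.
case: (eqVneq x a) => [xa|xa]; case: (eqVneq y b) => [yb|yb];
case: (eqVneq x b) => [xb|xb]; case: (eqVneq y a) => [ya|ya]; subst;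
  rewrite /= ?ab ?xpair_eqE ?eqxx ?andbT ?andbF //=.
all: try (by move: ab; rewrite ltnn).
all: try (by rewrite ltnNge (ltnW ab)).
all: case: ifP => H; rewrite xpair_eqE ?eqxx ?(negbTE xa) ?(negbTE xb) ?(negbTE ya) ?(negbTE yb) ?andbF ?andbT //.
by move: H; rewrite ltnNge (ltnW ab).
Qed.

Lemma pointwise N (a b c x y : 'I_N) : (a < b)%N ->
  (forall t, t != a -> t != b -> (c != a) && (c != b)) ->
  ~~ odd (((x != y) && (key x y == (a, b)) : nat) + (hcol a b c x != hcol a b c y) +
           (gcol a b x != gcol a b y) + (gcol b a x != gcol b a y)).
Proof.
move=> ab hc.
have anb : a != b by rewrite neq_ltn ab.
rewrite keyE // /hcol /gcol.
case: (eqVneq x a) => [xa|xa]; case: (eqVneq y b) => [yb|yb];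
case: (eqVneq x b) => [xb|xb]; case: (eqVneq y a) => [ya|ya]; subst;
  rewrite /= ?eqxx ?(negbTE anb) ?(eq_sym b a) ?(negbTE anb) //=.
all: try by rewrite ltnn in ab.
all: rewrite andbF /=.
all: try (move/andP: (hc y ya yb) => [ca cb]); try (move/andP: (hc x xa xb) => [ca cb]).
all: by rewrite ?(eq_sym a c) ?(eq_sym b c) ?ca ?cb.
Qed.


Lemma parity N k (s : 'S_k) (i : 'I_k -> 'I_N) : odd (inv_count s i) ->
  exists g : 'I_N -> 'I_N, exists a b c,
    odd (inv_count s (fun r => g (i r))) /\ forall t, g t = a \/ g t = b \/ g t = c.
Proof.
move=> Ho; apply: NNPP => Hn.
have Hev : forall (g : 'I_N -> 'I_N) (a b c : 'I_N), (forall t, g t = a \/ g t = b \/ g t = c) ->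
    ~~ odd (inv_count s (fun r => g (i r))).
  move=> g a b c Hg; case Hodd: (odd _) => //; exfalso; apply: Hn; by exists g, a, b, c.
suff: ~~ odd (inv_count s i) by rewrite Ho.
rewrite inv_countE.
have -> : \sum_(p | Invp s p) (i (s p.1) != i (s p.2) : nat)
        = \sum_(p | Invp s p && (i (s p.1) != i (s p.2))) 1.
  rewrite [RHS]big_mkcondr /=; apply: eq_bigr => p _; by case: (_ != _).
rewrite -dvdn2 (partition_big (fun p => key (i (s p.1)) (i (s p.2))) (fun j => (j.1 < j.2)%N)).
  apply: dvdn_sum => [[a b]] /= ab.
  have [c hc] : exists c : 'I_N, forall t, t != a -> t != b -> (c != a) && (c != b).
    case: (pickP (fun t => (t != a) && (t != b))) => [c0 Hc0|Hno].
      by exists c0 => t _ _.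
    by exists a => t ta tb; move: (Hno t); rewrite ta tb.
  have E : \sum_(p | Invp s p)
      (((i (s p.1) != i (s p.2)) && (key (i (s p.1)) (i (s p.2)) == (a, b)) : nat)
       + (hcol a b c (i (s p.1)) != hcol a b c (i (s p.2)))
       + (gcol a b (i (s p.1)) != gcol a b (i (s p.2)))
       + (gcol b a (i (s p.1)) != gcol b a (i (s p.2))))
     = \sum_(p | (Invp s p && (i (s p.1) != i (s p.2))) &&
               (key (i (s p.1)) (i (s p.2)) == (a, b))) 1
       + inv_count s (fun r => hcol a b c (i r))
       + inv_count s (fun r => gcol a b (i r))
       + inv_count s (fun r => gcol b a (i r)).
    rewrite !big_split /= !inv_countE; congr (_ + _ + _ + _).
    rewrite [RHS](eq_bigl (fun p => Invp s p && ((i (s p.1) != i (s p.2)) &&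
        (key (i (s p.1)) (i (s p.2)) == (a, b))))); last by move=> p; rewrite andbA.
    rewrite [RHS]big_mkcondr /=; apply: eq_bigr => p _; by case: (_ && _).
  have H1 : 2 %| \sum_(p | Invp s p)
      (((i (s p.1) != i (s p.2)) && (key (i (s p.1)) (i (s p.2)) == (a, b)) : nat)
       + (hcol a b c (i (s p.1)) != hcol a b c (i (s p.2)))
       + (gcol a b (i (s p.1)) != gcol a b (i (s p.2)))
       + (gcol b a (i (s p.1)) != gcol b a (i (s p.2)))).
    by apply: dvdn_sum => p _; rewrite dvdn2; apply: pointwise.
  move: H1; rewrite E !dvdn2 !oddD.
  have h1 : ~~ odd (inv_count s (fun r => hcol a b c (i r))).
    by apply: (Hev _ a b c) => t; rewrite /hcol; repeat case: ifP => _; auto.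
  have h2 : ~~ odd (inv_count s (fun r => gcol a b (i r))).
    by apply: (Hev _ a b b) => t; rewrite /gcol; case: ifP => _; auto.
  have h3 : ~~ odd (inv_count s (fun r => gcol b a (i r))).
    by apply: (Hev _ b a a) => t; rewrite /gcol; case: ifP => _; auto.
  rewrite (negbTE h1) (negbTE h2) (negbTE h3).
  by rewrite !addbF.
move=> p /andP[_ nxy]; rewrite /key; case: ifP => //= H.
by rewrite ltn_neqAle leqNgt H andbT val_eqE eq_sym.
Qed.

Lemma nz_mono N k (x : point N) (i : 'I_k -> 'I_N) :
  mono x i <> R0 -> forall r, x (i r) <> R0.
Proof. by move=> H r Hr; apply: H; apply/mono0; exists r. Qed.

Lemma Sd1 N (x : point N) : in_Sd 1 x <->
  on_sphere x /\ forall u v, u != v -> x u = R0 \/ x v = R0.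
Proof.
split.
- case=> Hs H; split=> // u v uv.
  have Hj : injective (tnth [tuple u; v]) by apply/tuple_uniqP; rewrite /= inE uv.
  have [r Hr] := proj1 (mono0 x _) (H _ Hj).
  have := mem_tnth r [tuple u; v]; rewrite !inE => /orP[/eqP E|/eqP E];
    rewrite E in Hr; auto.
- case=> Hs H; split=> // j Hj; apply/mono0.
  have ne : j ord0 != j ord_max by apply/eqP => /Hj.
  by case: (H _ _ ne) => E; [exists ord0 | exists ord_max].
Qed.

Lemma Sd2 N (x : point N) : in_Sd 2 x <->
  on_sphere x /\ forall u v w, u != v -> u != w -> v != w ->
     x u = R0 \/ x v = R0 \/ x w = R0.
Proof.
split.
- case=> Hs H; split=> // u v w uv uw vw.
  have Hj : injective (tnth [tuple u; v; w]).
    by apply/tuple_uniqP; rewrite /= !inE negb_or uv uw vw.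
  have [r Hr] := proj1 (mono0 x _) (H _ Hj).
  have := mem_tnth r [tuple u; v; w]; rewrite !inE => /orP[/eqP E|/orP[/eqP E|/eqP E]];
    rewrite E in Hr; auto.
- case=> Hs H; split=> // j Hj; apply/mono0.
  pose o1 := @Ordinal 3 1 isT.
  have n01 : j ord0 != j o1 by apply/eqP => /Hj.
  have n02 : j ord0 != j ord_max by apply/eqP => /Hj.
  have n12 : j o1 != j ord_max by apply/eqP => /Hj.
  by case: (H _ _ _ n01 n02 n12) => [E|[E|E]]; [exists ord0 | exists o1 | exists ord_max].
Qed.

Lemma SdN N (x : point N) : in_Sd N x <-> on_sphere x.
Proof.
split; first by case.
move=> Hs; split=> // j Hj; exfalso.
by have := inj_le Hj; rewrite ltnn.
Qed.

Theorem proposition2p6 (N : nat) (HN : (1 <= N)%N) (F : perm_family) :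
  exists d : nat,
    [/\ (1 <= d <= N)%N,
        (forall x : point N, in_inter F x <-> in_Sd d x)
      & (d = 1 \/ d = 2 \/ d = N)].
Proof.
pose bad2 := exists k (s : 'S_k) (i : 'I_k -> 'I_N) (a b : 'I_N),
  F k s /\ odd (inv_count s i) /\ forall r, i r = a \/ i r = b.
pose bad3 := exists k (s : 'S_k) (i : 'I_k -> 'I_N) (a b c : 'I_N),
  F k s /\ odd (inv_count s i) /\ forall r, i r = a \/ i r = b \/ i r = c.
case: (classic bad2) => [B2|nB2].
  exists 1; split; [by rewrite leqnn HN| |by left].
  move=> x; rewrite Sd1; split.
  - case=> Hs HF; split=> // u v uv.
    case: (Req_dec (x u) R0) => [|xu]; first by left.
    case: (Req_dec (x v) R0) => [|xv]; first by right.
    exfalso; case: B2 => k [s [i [a [b [Fs [Ho Hab]]]]]].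
    have ab : a != b.
      apply/eqP => E; subst b; move: Ho; rewrite inv_const //.
      by move=> r r'; case: (Hab r) => ->; case: (Hab r') => ->.
    pose g t := if t == a then u else v.
    have Hr : forall r r', (g (i r) == g (i r')) = (i r == i r').
      move=> r r'; rewrite /g; case: (Hab r) => ->; case: (Hab r') => ->;
        rewrite ?eqxx ?(negbTE ab) ?(eq_sym b a) ?(negbTE ab) //.
      - exact: negbTE uv.
      - by apply/negbTE; rewrite eq_sym.
    have Ho' : odd (inv_count s (fun r => g (i r))) by rewrite inv_relabel.
    have [r Er] := proj1 (mono0 _ _) (proj1 (sat_FE F x) HF k s Fs _ Ho').
    by move: Er; rewrite /g; case: ifP.
  - case=> Hs H; split=> //; apply/sat_FE => k s Fs i Ho.
    apply: NNPP => Hm; have Hnz := nz_mono Hm.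
    move: Ho; rewrite inv_const // => r r'.
    case: (eqVneq (i r) (i r')) => // ne.
    by case: (H _ _ ne) => /Hnz.
case: (classic bad3) => [B3|nB3].
  case: B3 => k [s [i [a [b [c [Fs [Ho Habc]]]]]]].
  have ab : a != b.
    apply/eqP => E; subst b; apply: nB2; exists k, s, i, a, c; do 2 split => //.
    by move=> r; case: (Habc r) => [|[|]]; auto.
  have ac : a != c.
    apply/eqP => E; subst c; apply: nB2; exists k, s, i, a, b; do 2 split => //.
    by move=> r; case: (Habc r) => [|[|]]; auto.
  have bc : b != c.
    apply/eqP => E; subst c; apply: nB2; exists k, s, i, a, b; do 2 split => //.
    by move=> r; case: (Habc r) => [|[|]]; auto.
  have N2 : (2 <= N)%N.
    have Hj : injective (tnth [tuple a; b]) by apply/tuple_uniqP; rewrite /= inE ab.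
    exact: inj_le Hj.
  exists 2; split; [by rewrite N2 | | by right; left].
  move=> x; rewrite Sd2; split.
  - case=> Hs HF; split=> // u v w uv uw vw.
    case: (Req_dec (x u) R0) => [|xu]; first by left.
    case: (Req_dec (x v) R0) => [|xv]; first by right; left.
    case: (Req_dec (x w) R0) => [|xw]; first by right; right.
    exfalso.
    pose g := fun t : 'I_N => (if t == a then u else if t == b then v else w) : 'I_N.
    have Hr : forall r r', (g (i r) == g (i r')) = (i r == i r').
      move=> r r'; rewrite /g; case: (Habc r) => [->|[->|->]]; case: (Habc r') => [->|[->|->]];
        rewrite ?eqxx ?(negbTE ab) ?(negbTE ac) ?(negbTE bc) ?(eq_sym b a) ?(eq_sym c a) ?(eq_sym c b)
          ?(negbTE ab) ?(negbTE ac) ?(negbTE bc) //;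
        apply/negbTE; first [ done | by rewrite eq_sym ].
    have Ho' : odd (inv_count s (fun r => g (i r))) by rewrite inv_relabel.
    have [r Er] := proj1 (mono0 _ _) (proj1 (sat_FE F x) HF k s Fs _ Ho').
    by move: Er; rewrite /g; case: ifP => _; [|case: ifP].
  - case=> Hs H; split=> //; apply/sat_FE => k' s' Fs' i' Ho'.
    apply: NNPP => Hm; have Hnz := nz_mono Hm.
    case: (classic (forall r r', i' r = i' r')) => [Hc|Hnc].
      by move: Ho'; rewrite inv_const.
    have [r1 Hr1] := not_all_ex_not _ _ Hnc.
    have [r2 Hr2] := not_all_ex_not _ _ Hr1.
    apply: nB2; exists k', s', i', (i' r1), (i' r2); do 2 split => //.
    move=> r; case: (eqVneq (i' r) (i' r1)) => [|n1]; first by left.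
    case: (eqVneq (i' r) (i' r2)) => [|n2]; first by right.
    have n12 : i' r1 != i' r2 by apply/eqP.
    rewrite eq_sym in n1; rewrite eq_sym in n2.
    by case: (H _ _ _ n12 n1 n2) => [/Hnz|[/Hnz|/Hnz]].
exists N; split; [by rewrite leqnn HN | | by right; right].
move=> x; rewrite SdN; split; first by case.
move=> Hs; split=> //; apply/sat_FE => k s Fs i Ho; exfalso.
have [g [a [b [c [Ho' Hg]]]]] := parity Ho.
by apply: nB3; exists k, s, (fun r => g (i r)), a, b, c.
Qed.
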